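(* Let $(C,\mathfrak p,\mathfrak d)$ be a regular $q$-magma coalgebra. If $0\le i,j,k\le n-1$ and $k>i$, then $\mathfrak p_{ij}^k=\mathfrak d_{ij}^k=0$.
   Context: $K$ is an algebraically closed field of characteristic $0$ and $n\ge2$. $C$ is the coalgebra dual to $K[y]/\langle y^n\rangle$: basis $x_0,\dots,x_{n-1}$, $\Delta(x_i)=\sum_{j+k=i}x_j\otimes x_k$, $\epsilon(x_i)=\delta_{i0}$; $C\otimes C$ has the tensor product coalgebra structure; Sweedler notation $\Delta(b)=b_{(1)}\otimes b_{(2)}$. For linear maps $\mathfrak p,\mathfrak d\colon C\otimes C\to C$ write $a\cdot b=\mathfrak p(a\otimes b)$, $a:b=\mathfrak d(a\otimes b)$, $\mathfrak p(x_i\otimes x_j)=\sum_{k=0}^{n-1}\mathfrak p_{ij}^kx_k$, $\mathfrak d(x_i\otimes x_j)=\sum_{k=0}^{n-1}\mathfrak d_{ij}^kx_k$. A triple $(C,\mathfrak p,\mathfrak d)$ with $\mathfrak p,\mathfrak d$ coalgebra morphisms is a regular $q$-magma coalgebra if there are coalgebra morphisms $a\otimes b\mapsto a^b$, $a\otimes b\mapsto a_b$ from $C\otimes C$ to $C$ with $a^{b_{(1)}}\cdot b_{(2)}=(a\cdot b_{(1)})^{b_{(2)}}=\epsilon(b)a$ and $(a:b_{(2)})_{b_{(1)}}=a_{b_{(2)}}:b_{(1)}=\epsilon(b)a$ for all $a,b\in C$. *)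

(* Defs.v *)
From mathcomp Require Import all_boot all_order all_algebra.
Set Implicit Arguments. Unset Strict Implicit. Unset Printing Implicit Defensive.
Import GRing.Theory.
Local Open Scope ring_scope.

(* C has basis x_0..x_{n-1} (indexed by 'I_n); C (x) C has basis x_i (x) x_j.
   A linear map f : C (x) C -> C is given by its structure constants:
   f i j k = f_{ij}^k, i.e. f (x_i (x) x_j) = \sum_k f i j k x_k. *)
Definition bilin (K : Type) (n : nat) := 'I_n -> 'I_n -> 'I_n -> K.

Definition eps {K : nzRingType} {n : nat} (m : 'I_n) : K := (m == 0%N :> nat)%:R.

(* f : C (x) C -> C is a coalgebra morphism, C (x) C with the tensor product
   coalgebra structure:
   Delta(x_i (x) x_j) = \sum_{a+b=i} \sum_{c+e=j} (x_a (x) x_c) (x) (x_b (x) x_e),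
   eps(x_i (x) x_j) = eps(x_i) eps(x_j).
   Condition 1 compares coefficients of x_k (x) x_l in
   Delta(f(x_i (x) x_j)) and (f (x) f)(Delta(x_i (x) x_j));
   condition 2 is eps o f = eps_{C (x) C}. *)
Definition is_coalg_morphism (K : nzRingType) (n : nat) (f : bilin K n) : Prop :=
  (forall i j k l : 'I_n,
      \sum_(m < n | (m : nat) == (k + l)%N) f i j m =
      \sum_(a < n) \sum_(b < n | (a + b)%N == i) \sum_(c < n) \sum_(e < n | (c + e)%N == j)
         f a c k * f b e l)
  /\ (forall i j : 'I_n, \sum_(m < n) f i j m * eps m = eps i * eps j).

(* (C, p, d) is a regular q-magma coalgebra: p, d are coalgebra morphisms and there
   are coalgebra morphisms u (a (x) b |-> a^b) and v (a (x) b |-> a_b) with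
     a^{b_(1)} . b_(2)    = eps(b) a,
     (a . b_(1))^{b_(2)}  = eps(b) a,
     (a : b_(2))_{b_(1)}  = eps(b) a,
     a_{b_(2)} : b_(1)    = eps(b) a,
   checked on basis elements a = x_i, b = x_j (coefficient of x_k), with
   Delta(x_j) = \sum_{c+e=j} x_c (x) x_e. *)
Definition regular_q_magma_coalgebra (K : nzRingType) (n : nat) (p d : bilin K n) : Prop :=
  is_coalg_morphism p /\ is_coalg_morphism d /\
  exists u v : bilin K n,
    is_coalg_morphism u /\ is_coalg_morphism v /\
    (forall i j k : 'I_n,
       \sum_(c < n) \sum_(e < n | (c + e)%N == j) \sum_(m < n) u i c m * p m e k
         = eps j * (i == k)%:R) /\
    (forall i j k : 'I_n,
       \sum_(c < n) \sum_(e < n | (c + e)%N == j) \sum_(m < n) p i c m * u m e k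
         = eps j * (i == k)%:R) /\
    (forall i j k : 'I_n,
       \sum_(c < n) \sum_(e < n | (c + e)%N == j) \sum_(m < n) d i e m * v m c k
         = eps j * (i == k)%:R) /\
    (forall i j k : 'I_n,
       \sum_(c < n) \sum_(e < n | (c + e)%N == j) \sum_(m < n) v i e m * d m c k
         = eps j * (i == k)%:R).

(* Main.v *)
Require Import Defs.
From mathcomp Require Import all_boot all_order all_algebra zify ring.
Set Implicit Arguments. Unset Strict Implicit. Unset Printing Implicit Defensive.
Import GRing.Theory.
Local Open Scope ring_scope.

Definition F (K : nzRingType) n (f : bilin K n.+1) (k a c : nat) : K :=
  if [&& (k < n.+1)%N, (a < n.+1)%N & (c < n.+1)%N] then f (inord a) (inord c) (inord k) else 0.

Lemma FE (K : nzRingType) n (f : bilin K n.+1) (a c k : 'I_n.+1) : F f k a c = f a c k.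
Proof. by rewrite /F !ltn_ord !inord_val. Qed.

Lemma F_out (K : nzRingType) n (f : bilin K n.+1) k a c :
  ~~ [&& (k < n.+1)%N, (a < n.+1)%N & (c < n.+1)%N] -> F f k a c = 0.
Proof. by rewrite /F => /negbTE ->. Qed.

Lemma sumS (K : nzRingType) n (G : 'I_n.+1 -> K) (c j : nat) : (j < n.+1)%N ->
  \sum_(e < n.+1 | (c + e)%N == j) G e = if (c <= j)%N then G (inord (j - c)) else 0.
Proof.
move=> hj; case: leqP => h.
- rewrite (big_pred1 (inord (j - c))) // => e /=.
  rewrite -val_eqE /= inordK; last by lia.
  by apply/eqP/eqP; lia.
- rewrite big_pred0 // => e; apply/eqP; lia.
Qed.

Lemma sum1 (K : nzRingType) N (G : 'I_N -> K) a1 (h1 : (a1 < N)%N) :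
  (forall a : 'I_N, (a:nat) != a1 -> G a = 0) -> \sum_(a < N) G a = G (Ordinal h1).
Proof.
move=> H; rewrite (bigD1 (Ordinal h1)) //= big1 ?addr0 //.
Qed.

Lemma sum2 (K : nzRingType) N (G : 'I_N -> K) a1 a2 (h1 : (a1 < N)%N) (h2 : (a2 < N)%N) :
  a1 != a2 ->
  (forall a : 'I_N, (a:nat) != a1 -> (a:nat) != a2 -> G a = 0) ->
  \sum_(a < N) G a = G (Ordinal h1) + G (Ordinal h2).
Proof.
move=> ne H; rewrite (bigD1 (Ordinal h1)) //= (bigD1 (Ordinal h2)) /=;
  last by rewrite -val_eqE /= eq_sym.
rewrite big1 ?addr0 // => a /andP[ha hb]; apply: H.
  by apply: contra ha => /eqP e; apply/eqP/val_inj.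
by apply: contra hb => /eqP e; apply/eqP/val_inj.
Qed.

Lemma coalgN (K : nzRingType) n (f : bilin K n.+1) : is_coalg_morphism f ->
  forall k l i j : nat, (k < n.+1)%N -> (l < n.+1)%N -> (i < n.+1)%N -> (j < n.+1)%N ->
  F f (k + l) i j = \sum_(a < n.+1) \sum_(c < n.+1)
     (if (a <= i)%N && (c <= j)%N then F f k a c * F f l (i - a) (j - c) else 0).
Proof.
move=> [H _] k l i j hk hl hi hj.
have := H (inord i) (inord j) (inord k) (inord l).
rewrite !inordK //.
case: (ltnP (k + l) n.+1) => hkl.
  rewrite (big_pred1 (inord (k + l))) => [|m /=]; last first.
    by rewrite -val_eqE /= inordK.
  rewrite {1}/F hkl hi hj /= => ->.
  apply: eq_bigr => a _; rewrite sumS //.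
  case: ifP => hai; last by rewrite big1.
  under eq_bigr => c _ do rewrite sumS //.
  apply: eq_bigr => c _; case: ifP => hcj //.
  have h1 : (i - a < n.+1)%N by lia.
  have h2 : (j - c < n.+1)%N by lia.
  by rewrite /F hk hl !ltn_ord h1 h2 /= !inord_val.
rewrite big_pred0 => [|m]; last by apply/eqP; have := ltn_ord m; lia.
rewrite F_out; last by rewrite ltnNge hkl.
move=> E; rewrite [LHS]E; apply: eq_bigr => a _; rewrite sumS //.
case: ifP => hai; last by rewrite big1.
under eq_bigr => c _ do rewrite sumS //.
apply: eq_bigr => c _; case: ifP => hcj //.
have h1 : (i - a < n.+1)%N by lia.
have h2 : (j - c < n.+1)%N by lia.
by rewrite /F hk hl !ltn_ord h1 h2 /= !inord_val.
Qed.

Lemma coalg00 (K : nzRingType) n (f : bilin K n.+1) : is_coalg_morphism f ->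
  forall k l, (k < n.+1)%N -> (l < n.+1)%N -> F f (k + l) 0 0 = F f k 0 0 * F f l 0 0.
Proof.
move=> hf k l hk hl; rewrite (coalgN hf) //.
rewrite (sum1 (ltn0Sn n)) => [/=|a ha]; last first.
  by rewrite big1 // => c _; rewrite leqn0 (negbTE ha).
rewrite (sum1 (ltn0Sn n)) => [//|c hc].
by rewrite leqn0 (negbTE hc).
Qed.

Lemma G1 (K : fieldType) n (f : bilin K n.+1) : is_coalg_morphism f ->
  forall k, (0 < k)%N -> F f k 0 0 = 0.
Proof.
move=> hf; set c := F f 1 0 0.
have pw : forall k, (k.+1 < n.+1)%N -> F f k.+1 0 0 = c ^+ k.+1.
  elim=> [|k IH] hk; first by rewrite expr1.
  have -> : k.+2 = (k.+1 + 1)%N by rewrite addn1.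
  rewrite coalg00 //; try lia. rewrite exprD expr1 -IH //; lia.
have c0 : c = 0.
  case: n f hf @c pw => [|n] f hf c pw; first by rewrite /c F_out.
  have := coalg00 hf (k:=n.+1) (l:=1) (ltnSn _) (ltn0Sn _).
  rewrite F_out; last by rewrite addn1 ltnn.
  rewrite pw // -/c -exprSr => h.
  have : c ^+ n.+2 == 0 by rewrite -h.
  by rewrite expf_eq0 /= => /eqP.
move=> k hk; case: (ltnP k n.+1) => hkn.
  by rewrite -(prednK hk) pw ?prednK // c0 expr0n eqn0Ngt hk.
by rewrite F_out // ltnNge hkn.
Qed.

Lemma G2 (K : fieldType) n (f : bilin K n.+1) : is_coalg_morphism f ->
  forall m, (1 < m)%N -> F f m 1 0 = 0.
Proof.
move=> hf m hm.
case: (ltnP m n.+1) => hmn; last by rewrite F_out // ltnNge hmn.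
have -> : m = (m.-1 + 1)%N by lia.
rewrite (coalgN hf) //; try lia.
apply: big1 => a _; apply: big1 => c _.
case: ifP => // /andP[ha hc].
have c0 : c = 0%N :> nat by lia.
rewrite c0.
case: (a : nat) ha => [|[|a']] ha //=.
  by rewrite (G1 hf) ?mul0r //; lia.
by rewrite [F f 1 0 0](G1 hf) ?mulr0.
Qed.

Lemma unitL (K : fieldType) n (g h : bilin K n.+1) : is_coalg_morphism g ->
  (1 < n.+1)%N ->
  \sum_(m < n.+1) g (inord 1) ord0 m * h m ord0 (inord 1) = 1 -> F h 1 1 0 != 0.
Proof.
move=> hg hn.
have e1 : (inord 1 : 'I_n.+1) = Ordinal hn by apply: val_inj; rewrite /= inordK.
have cu := hg.2 (inord 1) ord0.
rewrite /eps e1 /= mul0r in cu.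
rewrite (sum1 (ltn0Sn n)) /= in cu; last by move=> m /negbTE ->; rewrite mulr0.
rewrite mulr1 in cu.
rewrite e1 (sum1 hn); last first.
  move=> m hm; case: (posnP m) => m0.
    have -> : m = Ordinal (ltn0Sn n) by apply: val_inj.
    by rewrite cu mul0r.
  have : F g m 1 0 = 0 by apply: (G2 hg); move: hm m0 => /eqP; lia.
  move=> hz; have := FE g (Ordinal hn) ord0 m; rewrite /= hz => <-.
  by rewrite mul0r.
move=> H; apply/eqP => H0.
move: H; rewrite -[h _ _ _]FE /= -/(F h 1 1 0) H0 mulr0 => /eqP.
by rewrite eq_sym oner_eq0.
Qed.

Definition Lk (K : nzRingType) n (f : bilin K n.+1) (m : nat) (al be : K) (k : nat) : Prop :=
  [/\ forall a c, (a < k)%N -> (c < m)%N -> F f k a c = 0,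
      forall a, (a.+1 < k)%N -> F f k a m = 0,
      F f k k.-1 m = k%:R * al ^+ k.-1 * be &
      F f k k 0 = al ^+ k].

Lemma key (K : fieldType) n (f : bilin K n.+1) : [pchar K] =i pred0 ->
  is_coalg_morphism f -> F f 1 1 0 != 0 -> forall j, F f 1 0 j = 0.
Proof.
move=> ch hf ha j0.
case: (eqVneq (F f 1 0 j0) 0) => // hb; exfalso.
have ex : exists j, F f 1 0 j != 0 by exists j0.
case: (ex_minnP ex) => m hm hmin.
have zb : forall j, (j < m)%N -> F f 1 0 j = 0.
  move=> j hj; apply/eqP; apply: contraTT hj => /hmin hmj; by rewrite -leqNgt.
have m1 : (0 < m)%N.
  by rewrite lt0n; apply: contra hm => /eqP ->; rewrite (G1 hf).
have mn : (m < n.+1)%N.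
  rewrite ltnNge; apply: contra hm => h; rewrite F_out //.
  by apply/negP => /and3P[_ _]; rewrite ltnNge h.
have n1 : (1 < n.+1)%N.
  rewrite ltnNge; apply: contra ha => h; rewrite F_out //.
  by apply/negP => /and3P[]; rewrite ltnNge h.
pose al := F f 1 1 0; pose be := F f 1 0 m.
have calc : forall k, (0 < k)%N -> (k < n.+1)%N -> Lk f m al be k ->
    F f (k + 1) k m = (k + 1)%:R * al ^+ k * be.
  move=> k k0 kn [L1 L2 L3 L4].
  have hk1 : (k.-1 < n.+1)%N by lia.
  rewrite (coalgN hf) //.
  rewrite (sum2 kn hk1); last first.
  - move=> a ha1 ha2; apply: big1 => c _; case: ifP => // /andP[hai hc].
    have ha3 : (a.+1 < k)%N by move: hai ha1 ha2 => /eqP ? /eqP ?; lia.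
    case: (ltnP c m) => hcm; first by rewrite L1 ?mul0r //; lia.
    have -> : c = m :> nat by lia.
    by rewrite L2 ?mul0r.
  - by apply/eqP; lia.
  rewrite /= (sum1 (ltn0Sn n)); last first.
    move=> c hc; case: ifP => // /andP[_ hcm].
    by rewrite subnn zb ?mulr0 //; move: hc => /eqP; lia.
  rewrite (sum1 mn); last first.
    move=> c hc; case: ifP => // /andP[_ hcm].
    by rewrite L1 ?mul0r //; move: hc => /eqP; lia.
  rewrite /= leqnn leq_pred leq0n subnn subn0.
  have -> : (k - k.-1 = 1)%N by lia.
  rewrite L3 L4 -/al -/be.
  case: k k0 {L1 L2 L3 L4 kn hk1} => // k _ /=.
  rewrite leqnn subnn -/al exprS natrD. ring.
have step : forall k, (0 < k)%N -> (k.+1 < n.+1)%N -> Lk f m al be k ->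
    Lk f m al be k.+1.
  move=> k k0 kn LL; have [L1 L2 L3 L4] := LL.
  have kn' : (k < n.+1)%N by lia.
  split.
  - move=> a c hA hc; rewrite -addn1 (coalgN hf) //; try lia.
    apply: big1 => a' _; apply: big1 => c' _; case: ifP => // /andP[ha' hc'].
    case: (ltnP a' k) => hak; first by rewrite L1 ?mul0r //; lia.
    have -> : (a - a' = 0)%N by lia.
    by rewrite zb ?mulr0 //; lia.
  - move=> a hA; rewrite -addn1 (coalgN hf) //; try lia.
    apply: big1 => a' _; apply: big1 => c' _; case: ifP => // /andP[ha' hc'].
    case: (ltnP a' a) => haa.
      case: (ltnP c' m) => hcm; first by rewrite L1 ?mul0r //; lia.
      have -> : c' = m :> nat by lia.
      by rewrite L2 ?mul0r //; lia.
    have -> : (a - a' = 0)%N by lia.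
    case: (posnP c') => hc0.
      by rewrite hc0 L1 ?mul0r //; lia.
    by rewrite zb ?mulr0 //; lia.
  - by rewrite /= -addn1 calc.
  - rewrite -addn1 (coalgN hf) //; try lia.
    have hk : (k < n.+1)%N by lia.
    rewrite (sum1 hk); last first.
      move=> a' ha'; apply: big1 => c' _; case: ifP => // /andP[ha2 hc'].
      case: (ltnP a' k) => hak; first by rewrite L1 ?mul0r //; lia.
      have -> : (k + 1 - a' = 0)%N by move: ha' => /eqP; lia.
      have -> : (0 - c' = 0)%N by lia.
      by rewrite (G1 hf) ?mulr0.
    rewrite /= (sum1 (ltn0Sn n)); last first.
      by move=> c hc; case: ifP => // /andP[_]; rewrite leqn0 (negbTE hc).
    rewrite /= leq0n andbT addn1 leqnSn subSnn L4 exprSr.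
    done.
have Lall : forall k, (0 < k)%N -> (k < n.+1)%N -> Lk f m al be k.
  elim=> // k IH _ kn; case: (posnP k) => k0.
    rewrite k0; split => //=.
    - by move=> a c; rewrite ltnS leqn0 => /eqP -> /zb.
    - by rewrite mul1r expr0 mul1r.
  by apply: step => //; apply: IH => //; lia.
have := calc n; rewrite F_out; last by rewrite addn1 ltnn.
move=> /(_ _ (ltnSn _) (Lall _ _ (ltnSn _))) h.
have : (n + 1)%:R * al ^+ n * be == 0 by rewrite -h //; lia.
rewrite !mulf_eq0 expf_eq0 (negbTE ha) (negbTE hm) andbF !orbF.
by move/pcharf0P: ch => ->; rewrite addn1.
Qed.

Lemma vanish (K : fieldType) n (f : bilin K n.+1) : is_coalg_morphism f ->
  (forall j, F f 1 0 j = 0) -> forall k i j, (i < k)%N -> F f k i j = 0.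
Proof.
move=> hf z; elim=> // k IH i j hik.
case: (posnP k) => k0.
  by move: hik; rewrite k0 ltnS leqn0 => /eqP ->.
case: (boolP [&& k.+1 < n.+1, i < n.+1 & j < n.+1]%N) => h; last by rewrite F_out.
case/and3P: h => hk hi hj.
rewrite -addn1 (coalgN hf) //; try lia.
apply: big1 => a _; apply: big1 => c _; case: ifP => // /andP[ha hc].
case: (ltnP a k) => hak; first by rewrite IH ?mul0r.
have -> : (i - a = 0)%N by lia.
by rewrite z mulr0.
Qed.

Lemma sum00 (K : nzRingType) N (G : 'I_N.+1 -> 'I_N.+1 -> K) :
  \sum_(c < N.+1) \sum_(e < N.+1 | (c + e)%N == (@ord0 N)) G c e = G ord0 ord0.
Proof.
rewrite (sum1 (ltn0Sn N)); last first.
  by move=> c hc; rewrite big_pred0 // => e /=; apply/eqP; move: hc => /eqP; lia.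
rewrite (big_pred1 ord0) //= => e; rewrite -val_eqE /=; apply/eqP/eqP; lia.
Qed.

Unset Implicit Arguments.
Set Strict Implicit.

Theorem proposition1p14 (K : closedFieldType) (n : nat)
  (charK0 : [pchar K] =i pred0) (hn : (2 <= n)%N) (p d : bilin K n) :
  regular_q_magma_coalgebra p d ->
  forall i j k : 'I_n, (i < k)%N -> p i j k = 0 /\ d i j k = 0.
Proof.
move: p d; case: n hn => [|[|n]] // hn p d.
move=> [hp [hd [u [v [hu [hv [c1 [c2 [c3 c4]]]]]]]]] i j k hik.
have n1 : (1 < n.+2)%N by [].
have e1 : forall (g h : bilin K n.+2),
   (forall i j k : 'I_n.+2, \sum_(c < n.+2) \sum_(e < n.+2 | (c + e)%N == j)
       \sum_(m < n.+2) g i e m * h m c k = eps j * (i == k)%:R) ->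
   \sum_(m < n.+2) g (inord 1) ord0 m * h m ord0 (inord 1) = 1.
  move=> g h c; have := c (inord 1) ord0 (inord 1).
  by rewrite (sum00 (fun c e => \sum_(m < n.+2) g (inord 1) e m * h m c (inord 1)))
     eqxx /eps /= mulr1.
have e2 : forall (g h : bilin K n.+2),
   (forall i j k : 'I_n.+2, \sum_(c < n.+2) \sum_(e < n.+2 | (c + e)%N == j)
       \sum_(m < n.+2) g i c m * h m e k = eps j * (i == k)%:R) ->
   \sum_(m < n.+2) g (inord 1) ord0 m * h m ord0 (inord 1) = 1.
  move=> g h c; have := c (inord 1) ord0 (inord 1).
  by rewrite (sum00 (fun c e => \sum_(m < n.+2) g (inord 1) c m * h m e (inord 1)))
     eqxx /eps /= mulr1.
have pz := unitL hu n1 (e2 _ _ c1).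
have dz := unitL hv n1 (e1 _ _ c4).
rewrite -!FE; split; apply: vanish => //; apply: key => //.
Qed.
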